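(* Let $\Gamma$ be the triangle graph (three vertices, three edges $e_1,e_2,e_3$, pairwise joining the vertices) with constant magnetic field, i.e. vertex weight $\omega\equiv 1$ on each vertex, so that its $\mathbf{V}$-polynomial is $$x_1^3+(t_{e_1}+t_{e_2}+t_{e_3})x_2x_1+(t_{e_1}t_{e_2}+t_{e_2}t_{e_3}+t_{e_1}t_{e_3}+t_{e_1}t_{e_2}t_{e_3})x_3$$ in the variables $x_1,x_2,x_3,t_{e_1},t_{e_2},t_{e_3}$. Then the affine hypersurface in $\mathbb{A}^6$ defined by the vanishing of this polynomial is not polynomially countable.
   Context: For a graph $\Gamma$ with vertex weight $\omega:V(\Gamma)\to S$, the $\mathbf{V}$-polynomial is $\mathbf{V}_\Gamma(t,x)=\sum_{A\subseteq E(\Gamma)}\prod_{j}x_{s_j}\prod_{e\in A}t_e$, where the product over $j$ runs over the connected components of the spanning subgraph with edge set $A$ and $s_j$ is the sum of the weights of the vertices of the $j$-th component. A hypersurface defined by a polynomial with integer coefficients is polynomially countable if for every prime $p$ and every power $q=p^r$, the number $N(q)$ of its $\mathbb{F}_q$-points (solutions in $\mathbb{F}_q$ of the reduced equation) is given by a polynomial in $q$ with integer coefficients. *)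

(* Defs.v *)
From HB Require Import structures.
From mathcomp Require Import all_boot all_order all_algebra all_field.
Set Implicit Arguments. Unset Strict Implicit. Unset Printing Implicit Defensive.
Import GRing.Theory.
Local Open Scope ring_scope.

(* V-polynomial of the triangle graph with constant magnetic field (omega = 1),
   evaluated in a commutative ring R; integer coefficients (all equal to 1) are
   reduced into R, i.e. this is the "reduced equation" over F_q when R = F_q. *)
Definition Vtriangle (R : comNzRingType) (x1 x2 x3 t1 t2 t3 : R) : R :=
  x1 ^+ 3 + (t1 + t2 + t3) * x2 * x1
  + (t1 * t2 + t2 * t3 + t1 * t3 + t1 * t2 * t3) * x3.

Definition NVtriangle (F : finFieldType) : nat :=
  #|[pred v : F * F * F * F * F * F |
      let: (x1, x2, x3, t1, t2, t3) := v in Vtriangle x1 x2 x3 t1 t2 t3 == 0]|.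

(* Polynomial countability of this hypersurface: there is Q in Z[X] with
   N(q) = Q(q) for every finite field F_q (every prime power q = p^r is the
   order of a finite field, unique up to isomorphism). *)
Definition Vtriangle_polynomially_countable : Prop :=
  exists Q : {poly int}, forall F : finFieldType,
    (NVtriangle F)%:Z = Q.[(#|F|)%:Z].

(* Main.v *)
Require Import Defs.
From mathcomp Require Import all_boot all_order all_algebra all_field.
Set Implicit Arguments. Unset Strict Implicit. Unset Printing Implicit Defensive.
Import GRing.Theory.

Definition Vn (x1 x2 x3 t1 t2 t3 : nat) := (x1 ^ 3 + (t1 + t2 + t3) * x2 * x1 + (t1 * t2 + t2 * t3 + t1 * t3 + t1 * t2 * t3) * x3)%N.
Definition cnt p := (\sum_(0 <= x1 < p) \sum_(0 <= x2 < p) \sum_(0 <= x3 < p) \sum_(0 <= t1 < p) \sum_(0 <= t2 < p) \sum_(0 <= t3 < p) (p %| Vn x1 x2 x3 t1 t2 t3 : nat))%N.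

Lemma c3 : cnt 3 = 297%N. Proof. rewrite /cnt !unlock. vm_compute. reflexivity. Qed.
Lemma c7 : cnt 7 = 18739%N. Proof. rewrite /cnt !unlock. vm_compute. reflexivity. Qed.

Lemma sumP (A B : finType) (G : A * B -> nat) :
  (\sum_(v : A * B) G v = \sum_(a : A) \sum_(b : B) G (a, b))%N.
Proof. by rewrite pair_big; apply: eq_bigr => -[]. Qed.

Lemma sumF p (H : nat -> nat) : prime p ->
  (\sum_(x : 'F_p) H (val x) = \sum_(0 <= i < p) H i)%N.
Proof.
move=> pp; transitivity (\sum_(0<=i<(Zp_trunc (pdiv p)).+2) H i)%N; first by rewrite big_mkord.
by rewrite (Fp_cast pp).
Qed.

Lemma Vbridge p (x1 x2 x3 t1 t2 t3 : 'F_p) : prime p ->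
  (Vtriangle x1 x2 x3 t1 t2 t3 == 0%R) = (p %| Vn (val x1) (val x2) (val x3) (val t1) (val t2) (val t3)).
Proof.
move=> pp.
have E : Vtriangle x1 x2 x3 t1 t2 t3 = (Vn (val x1) (val x2) (val x3) (val t1) (val t2) (val t3))%:R%R.
  by rewrite /Vn /Vtriangle !(natrD, natrM, natr_Zp) !exprS expr0 mulr1.
rewrite E -(Fp_nat_mod pp) -val_eqE /= val_Fp_nat // modn_mod.
by rewrite /dvdn.
Qed.

Lemma sumF2 p (K : 'F_p -> nat) : prime p ->
  (\sum_(x : 'F_p) K x = \sum_(0 <= i < p) K (i%:R)%R)%N.
Proof.
move=> pp; rewrite -(sumF (fun i => K (i%:R)%R)) //.
by apply: eq_bigr => x _; rewrite natr_Zp.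
Qed.

Lemma valFp p i : prime p -> (i < p)%N -> val (i%:R : 'F_p)%R = i.
Proof. by move=> pp hi; have := val_Fp_nat pp i; rewrite modn_small. Qed.

Lemma Nbridge p : prime p -> NVtriangle [the finFieldType of 'F_p] = cnt p.
Proof.
move=> pp; rewrite /NVtriangle -sum1_card big_mkcond /= !sumP.
rewrite /cnt sumF2 //; apply: eq_big_nat => i1 /andP[_ h1].
rewrite sumF2 //; apply: eq_big_nat => i2 /andP[_ h2].
rewrite sumF2 //; apply: eq_big_nat => i3 /andP[_ h3].
rewrite sumF2 //; apply: eq_big_nat => i4 /andP[_ h4].
rewrite sumF2 //; apply: eq_big_nat => i5 /andP[_ h5].
rewrite sumF2 //; apply: eq_big_nat => i6 /andP[_ h6].
rewrite inE /= Vbridge // !valFp //.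
Qed.

Lemma horner_mod4 (Q : {poly int}) (a b : nat) (n m : nat) :
  (a %% 4 = b %% 4)%N -> (Q.[a%:Z] = n%:Z)%R -> (Q.[b%:Z] = m%:Z)%R -> (n %% 4 = m %% 4)%N.
Proof.
move=> hab ha hb.
have e : ((Q.[a%:Z])%:~R = (Q.[b%:Z])%:~R :> 'Z_4)%R.
  rewrite -!horner_map /= -!pmulrn.
  congr (_ .[_])%R; apply: val_inj.
  by rewrite /= !val_Zp_nat.
move: e; rewrite ha hb -!pmulrn => /(congr1 val).
by rewrite /= !val_Zp_nat.
Qed.

Theorem theorem3p2 : ~ Vtriangle_polynomially_countable.
Proof.
move=> [Q HQ].
have h3 := HQ [the finFieldType of 'F_3].
have h7 := HQ [the finFieldType of 'F_7].
rewrite Nbridge // c3 card_Fp // in h3.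
rewrite Nbridge // c7 card_Fp // in h7.
have := @horner_mod4 Q 7 3 _ _ erefl (esym h7) (esym h3).
by [].
Qed.
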